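(* $$\sum_{k=1}^\infty\frac{(15k^2-124k-40)8^k}{(4k+1)\binom{4k}k}=30-\frac32\pi.$$ *)

(* Defs.v *)
From Stdlib Require Import Reals.
From Coquelicot Require Import Coquelicot.
Open Scope R_scope.

Definition term (k : nat) : R :=
  (15 * (INR k)^2 - 124 * INR k - 40) * 8 ^ k
  / ((4 * INR k + 1) * Binomial.C (4 * k) k).

(* Main.v *)
Require Import Defs.
From Stdlib Require Import Reals Lra Lia Factorial.
From Coquelicot Require Import Coquelicot.
Open Scope R_scope.

Ltac toR := match goal with |- ?u = ?v => change (@eq R u v) end.

Definition yy (x : R) := 8 * x ^ 3 * (1 - x).
Definition DD (x : R) := 1 - yy x.
Definition pp (m : R) := 15 * m ^ 2 - 124 * m - 40.
Definition QQ (m x : R) := pp m * DD x ^ 2 + (30 * m - 124) * yy x * DD x + 15 * yy x * (1 + yy x).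
Definition TT (m : nat) (x : R) := yy x ^ m * QQ (INR m) x / DD x ^ 3.

Definition AA (x : R) := 165/2 + 3*x - 3*x^2 - 1318*x^3 + 980*x^4 + 320*x^5 + 5216*x^6 - 7728*x^7 + 2560*x^9.

Definition hh (x : R) := 2*x^2 - 2*x.
Definition qq (x : R) := 2*x^2 - 1.

Lemma DD_sos x : DD x = qq x ^ 2 + hh x ^ 2.
Proof. unfold DD, yy, qq, hh. ring. Qed.

Lemma is_derive_atan_comp (r : R -> R) x dr :
  is_derive r x dr -> is_derive (fun t => atan (r t)) x (dr / (1 + r x ^ 2)).
Proof.
  intros H. 
  pose proof (is_derive_comp atan r x _ _ (is_derive_atan (r x)) H) as H2.
  unfold scal in H2; simpl in H2; unfold mult in H2; simpl in H2.
  replace (dr / (1 + r x ^ 2)) with (dr * / (1 + (r x)²)); [exact H2|].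
  unfold Rsqr, Rdiv. f_equal. f_equal. ring.
Qed.

Ltac nzD HD := repeat (apply Rmult_integral_contrapositive_currified || exact R1_neq_R0 || (let E := fresh in intro E; apply HD; rewrite <- E; ring)).

Lemma derA x : DD x <> 0 -> is_derive (fun t => AA t / DD t ^ 2) x
   ((((3 - 6*x - 3*1318*x^2 + 4*980*x^3 + 5*320*x^4 + 6*5216*x^5 - 7*7728*x^6 + 9*2560*x^8) * DD x
      - 2 * AA x * (- (24 * x^2 - 32 * x^3)))) / DD x ^ 3).
Proof.
  intros HD. unfold AA, DD, yy in *. auto_derive.
  - nzD HD.
  - field; nzD HD.
Qed.

Definition F1 (t : R) := AA t / DD t ^ 2 - 3/2 * atan (hh t / qq t).
Definition F2 (t : R) := AA t / DD t ^ 2 - 3/2 * atan ((hh t + 2 * qq t) / (qq t - 2 * hh t)).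

Lemma TT1_eq x : TT 1 x = yy x * QQ 1 x / DD x ^ 3.
Proof. unfold TT. change (INR 1) with 1. rewrite pow_1. reflexivity. Qed.

Lemma derF1 x : qq x <> 0 -> is_derive F1 x (TT 1 x).
Proof.
  intros Hq.
  assert (HD : DD x <> 0).
  { rewrite DD_sos. intro E. apply Hq. nra. }
  assert (Hr : is_derive (fun t => hh t / qq t) x ((((4*x-2) * qq x - hh x * (4 * x))) / qq x ^ 2)).
  { unfold hh, qq in *. auto_derive.
    - nzD Hq.
    - field. auto. }
  pose proof (is_derive_atan_comp _ _ _ Hr) as Ha.
  pose proof (is_derive_scal _ _ (3/2) _ Ha) as Hs.
  pose proof (is_derive_minus _ _ _ _ _ (derA x HD) Hs) as Hm.
  match type of Hm with is_derive _ _ ?l => replace (TT 1 x) with l end.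
  - eapply is_derive_ext; [ | exact Hm]. intro t. unfold F1. reflexivity.
  - rewrite TT1_eq.
    assert (E1 : 1 + (hh x / qq x) ^ 2 = DD x / qq x ^ 2).
    { rewrite DD_sos. field. auto. }
    rewrite E1. unfold minus, plus, opp; simpl. unfold QQ, pp, AA, DD, yy, hh, qq in *. field. split; auto.
Qed.

Lemma derF2 x : qq x - 2 * hh x <> 0 -> is_derive F2 x (TT 1 x).
Proof.
  intros Hq.
  assert (HD : DD x <> 0).
  { rewrite DD_sos. intro E. apply Hq.
    assert (Hq0 : qq x = 0) by nra. assert (Hh0 : hh x = 0) by nra.
    rewrite Hq0, Hh0; ring. }
  assert (Hr : is_derive (fun t => (hh t + 2 * qq t) / (qq t - 2 * hh t)) x
     ((((12*x-2) * (qq x - 2 * hh x) - (hh x + 2 * qq x) * (-4 * x + 4))) / (qq x - 2 * hh x) ^ 2)).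
  { unfold hh, qq in *. auto_derive.
    - nzD Hq.
    - field. auto. }
  pose proof (is_derive_atan_comp _ _ _ Hr) as Ha.
  pose proof (is_derive_scal _ _ (3/2) _ Ha) as Hs.
  pose proof (is_derive_minus _ _ _ _ _ (derA x HD) Hs) as Hm.
  match type of Hm with is_derive _ _ ?l => replace (TT 1 x) with l end.
  - eapply is_derive_ext; [ | exact Hm]. intro t. unfold F2. reflexivity.
  - rewrite TT1_eq.
    assert (E1 : 1 + ((hh x + 2 * qq x) / (qq x - 2 * hh x)) ^ 2 = 5 * DD x / (qq x - 2 * hh x) ^ 2).
    { rewrite DD_sos. field. auto. }
    rewrite E1. unfold minus, plus, opp; simpl.
    unfold QQ, pp, AA, DD, yy, hh, qq in *. field. split; auto.
Qed.

Lemma yy_bound x : 0 <= x <= 1 -> 0 <= yy x <= 27/32.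
Proof.
  intros [H0 H1]. unfold yy. split.
  - apply Rmult_le_pos; [|lra]. apply Rmult_le_pos; [lra|]. apply pow_le; lra.
  - assert (E : 27/32 - 8 * x^3 * (1-x) = 8 * (x - 3/4)^2 * (x^2 + x/2 + 3/16)) by field.
    assert (0 <= 8 * (x - 3/4)^2 * (x^2 + x/2 + 3/16)).
    { apply Rmult_le_pos. apply Rmult_le_pos; [lra| apply pow2_ge_0]. nra. }
    lra.
Qed.

Lemma DD_pos x : 0 <= x <= 1 -> 5/32 <= DD x.
Proof. intros H. pose proof (yy_bound x H). unfold DD. lra. Qed.

Lemma cont_TT1 x : 0 <= x <= 1 -> continuous (TT 1) x.
Proof.
  intros H. pose proof (DD_pos x H) as HD.
  assert (HD' : DD x <> 0) by lra.
  apply (ex_derive_continuous (TT 1)). unfold TT, QQ, pp, DD, yy in *. auto_derive. nzD HD'.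
Qed.

Lemma int_part1 : is_RInt (TT 1) 0 (1/2) (minus (F1 (1/2)) (F1 0)).
Proof.
  apply (is_RInt_derive F1 (TT 1)).
  - intros x Hx. rewrite Rmin_left in Hx by lra. rewrite Rmax_right in Hx by lra.
    apply derF1. unfold qq. nra.
  - intros x Hx. rewrite Rmin_left in Hx by lra. rewrite Rmax_right in Hx by lra.
    apply cont_TT1. lra.
Qed.

Lemma int_part2 : is_RInt (TT 1) (1/2) 1 (minus (F2 1) (F2 (1/2))).
Proof.
  apply (is_RInt_derive F2 (TT 1)).
  - intros x Hx. rewrite Rmin_left in Hx by lra. rewrite Rmax_right in Hx by lra.
    apply derF2. unfold qq, hh. nra.
  - intros x Hx. rewrite Rmin_left in Hx by lra. rewrite Rmax_right in Hx by lra.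
    apply cont_TT1. lra.
Qed.

Lemma int_f : is_RInt (TT 1) 0 1 (30 - 3/2 * PI).
Proof.
  pose proof (is_RInt_Chasles _ _ _ _ _ _ int_part1 int_part2) as H.
  replace (30 - 3/2 * PI) with (plus (minus (F1 (1/2)) (F1 0)) (minus (F2 1) (F2 (1/2)))); [exact H|].
  unfold minus. unfold plus, opp; simpl. unfold F1, F2, AA, DD, yy, hh, qq.
  replace ((2 * (1 / 2) ^ 2 - 2 * (1 / 2)) / (2 * (1 / 2) ^ 2 - 1)) with 1 by field.
  replace ((2 * 0 ^ 2 - 2 * 0) / (2 * 0 ^ 2 - 1)) with 0 by field.
  replace ((2 * 1 ^ 2 - 2 * 1 + 2 * (2 * 1 ^ 2 - 1)) / (2 * 1 ^ 2 - 1 - 2 * (2 * 1 ^ 2 - 2 * 1))) with 2 by field.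
  replace ((2 * (1 / 2) ^ 2 - 2 * (1 / 2) + 2 * (2 * (1 / 2) ^ 2 - 1)) /
        (2 * (1 / 2) ^ 2 - 1 - 2 * (2 * (1 / 2) ^ 2 - 2 * (1 / 2)))) with (Ropp 3) by field.
  assert (H2 : atan 2 = PI/2 - atan (/ 2)).
  { rewrite <- atan_inv by lra. rewrite Rinv_inv. reflexivity. }
  assert (H3 : atan 3 = PI/2 - atan (/ 3)).
  { rewrite <- atan_inv by lra. rewrite Rinv_inv. reflexivity. }
  rewrite atan_opp, atan_1, atan_0, H2, H3.
  pose proof Machin_2_3 as HM. replace (atan (/ 2)) with (PI/4 - atan (/ 3)) by lra. field.
Qed.

Ltac posINR := repeat match goal with |- context [INR ?n] =>
   lazymatch goal with H : 0 <= INR n |- _ => fail | _ => pose proof (pos_INR n) end end.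
Ltac fixS := repeat match goal with |- context [match ?n with 0%nat => 1 | S _ => INR ?n + 1 end] =>
   change (match n with 0%nat => 1 | S _ => INR n + 1 end) with (INR (S n)); rewrite S_INR end.
Ltac fin := repeat split; fixS; try exact I; posINR; try lra; try (match goal with |- ?u = ?v => change (@eq R u v) end; cbn [Init.Nat.pred pow]; unfold Rminus, Rdiv; try change RinvImpl.Rinv with Rinv; field; repeat split; intro; lra).

Lemma INR_fact_nz n : INR (fact n) <> 0.
Proof. apply not_0_INR. apply fact_neq_0. Qed.

Lemma beta b : forall a, is_RInt (fun x => x ^ a * (1 - x) ^ b) 0 1
   (INR (fact a) * INR (fact b) / INR (fact (a + b + 1))).
Proof.
  induction b as [|b IH]; intros a.
  - pose proof (is_RInt_derive (fun x => x ^ (S a) / (INR a + 1)) (fun x => x ^ a * (1 - x) ^ 0) 0 1) as H.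
    replace (INR (fact a) * INR (fact 0) / INR (fact (a + 0 + 1))) with
       (minus (1 ^ (S a) / (INR a + 1)) (0 ^ (S a) / (INR a + 1))).
    + apply H.
      * intros x _. auto_derive; fin.
      * intros t _. apply (ex_derive_continuous (fun t => t ^ a * (1 - t) ^ 0)). auto_derive; fin.
    + rewrite pow1, pow_i by lia. change (minus ?u ?v) with (u - v).
      replace (a + 0 + 1)%nat with (S a) by lia. change (fact (S a)) with (S a * fact a)%nat.
      change (fact 0) with 1%nat. rewrite mult_INR, (S_INR a). change (INR 1) with 1.
      pose proof (INR_fact_nz a). posINR. match goal with |- ?u = ?v => change (@eq R u v) end. field; repeat split; try assumption; try lra.
  - set (G := fun x => x ^ (S a) * (1 - x) ^ (S b) / (INR a + 1)).
    set (dG := fun x => x ^ a * (1 - x) ^ (S b) - (INR b + 1) / (INR a + 1) * (x ^ (S a) * (1 - x) ^ b)).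
    assert (HG : is_RInt dG 0 1 (minus (G 1) (G 0))).
    { apply (is_RInt_derive G dG).
      - intros x _. unfold G, dG. auto_derive; fin.
      - intros x _. apply (ex_derive_continuous dG). unfold dG. auto_derive; fin. }
    pose proof (is_RInt_plus _ _ _ _ _ _ HG (is_RInt_scal _ _ _ ((INR b + 1) / (INR a + 1)) _ (IH (S a)))) as H.
    replace (INR (fact a) * INR (fact (S b)) / INR (fact (a + S b + 1))) with
      (plus (minus (G 1) (G 0)) (scal ((INR b + 1) / (INR a + 1)) (INR (fact (S a)) * INR (fact b) / INR (fact (S a + b + 1))))).
    + eapply is_RInt_ext; [|exact H].
      intros x _. unfold dG, plus, scal; simpl. unfold mult; simpl. ring.
    + unfold G. rewrite !pow1, !pow_i by lia. change (minus ?u ?v) with (u - v). change (plus ?u ?v) with (u + v). change (scal ?u ?v) with (u * v).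
      replace (a + S b + 1)%nat with (S a + b + 1)%nat by lia.
      change (fact (S a)) with (S a * fact a)%nat. change (fact (S b)) with (S b * fact b)%nat.
      rewrite !mult_INR, !S_INR. 
      pose proof (INR_fact_nz a). pose proof (INR_fact_nz b). pose proof (INR_fact_nz (S a + b + 1)).
      posINR.
      match goal with |- ?u = ?v => change (@eq R u v) end. rewrite Rminus_diag, pow_i by lia. rewrite !Rmult_0_l. field; repeat split; try assumption; try (intro; lra).
Qed.

Lemma term_beta k : term k = pp (INR k) * 8 ^ k * (INR (fact (3 * k)) * INR (fact k) / INR (fact (3 * k + k + 1))).
Proof.
  unfold term, Binomial.C, pp.
  replace (4 * k - k)%nat with (3 * k)%nat by lia.
  replace (3 * k + k + 1)%nat with (S (4 * k)) by lia.
  change (fact (S (4 * k))) with (S (4 * k) * fact (4 * k))%nat.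
  rewrite (mult_INR (S (4 * k))), (S_INR (4 * k)), (mult_INR 4 k).
  replace (INR 4) with 4 by (simpl; ring).
  pose proof (INR_fact_nz k). pose proof (INR_fact_nz (3 * k)). pose proof (INR_fact_nz (4 * k)).
  pose proof (pos_INR k).
  field. repeat split; try assumption; intro; lra.
Qed.

Lemma int_term k : is_RInt (fun x => pp (INR k) * yy x ^ k) 0 1 (term k).
Proof.
  rewrite term_beta.
  pose proof (is_RInt_scal _ _ _ (pp (INR k) * 8 ^ k) _ (beta k (3 * k))) as H.
  eapply is_RInt_ext; [|exact H].
  intros x _. change (scal ?u ?v) with (u * v).
  toR. unfold yy. rewrite !Rpow_mult_distr, pow_mult. ring.
Qed.

Fixpoint Sp (m : nat) (x : R) : R :=
  match m with O => 0 | S n => Sp n x + pp (INR (S n)) * yy x ^ (S n) end.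
Fixpoint Ts (m : nat) : R :=
  match m with O => 0 | S n => Ts n + term (S n) end.

Lemma int_Sp m : is_RInt (Sp m) 0 1 (Ts m).
Proof.
  induction m as [|m IH].
  - pose proof (is_RInt_const 0 1 0) as H.
    eapply is_RInt_ext; [|replace (Ts 0) with (scal (1 - 0) 0); [exact H|]].
    + intros; reflexivity.
    + change (scal ?u ?v) with (u * v). toR. simpl. ring.
  - pose proof (is_RInt_plus _ _ _ _ _ _ IH (int_term (S m))) as H.
    eapply is_RInt_ext; [|exact H]. intros x _. reflexivity.
Qed.

Lemma TT_step n x : DD x <> 0 -> TT n x - TT (S n) x = pp (INR n) * yy x ^ n.
Proof.
  intros HD. unfold TT, QQ, pp. rewrite S_INR. cbn [pow].
  unfold DD in *. set (y := yy x) in *. set (Y := y ^ n).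
  field. auto.
Qed.

Lemma Sp_TT m x : DD x <> 0 -> Sp m x + TT (S m) x = TT 1 x.
Proof.
  intros HD. induction m as [|m IH].
  - simpl. ring.
  - replace (Sp (S m) x) with (Sp m x + pp (INR (S m)) * yy x ^ (S m)) by reflexivity. rewrite <- IH. pose proof (TT_step (S m) x HD). lra.
Qed.

Lemma int_tail m : is_RInt (TT (S m)) 0 1 (30 - 3/2 * PI - Ts m).
Proof.
  pose proof (is_RInt_minus _ _ _ _ _ _ int_f (int_Sp m)) as H.
  eapply is_RInt_ext; [|exact H].
  intros x Hx. rewrite Rmin_left in Hx by lra. rewrite Rmax_right in Hx by lra.
  assert (HD : DD x <> 0). { pose proof (DD_pos x ltac:(lra)). intro; lra. }
  change (minus ?u ?v) with (u - v). toR. cbv beta. rewrite <- (Sp_TT m x HD). ring.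
Qed.

Definition rho := 27/32.

Lemma QQ_bound n x : 0 <= x <= 1 -> Rabs (QQ (INR n) x) <= 200 * (INR n + 1) ^ 2.
Proof.
  intros Hx. pose proof (yy_bound x Hx) as [Hy0 Hy1]. pose proof (DD_pos x Hx) as HD.
  assert (HD1 : DD x <= 1) by (unfold DD; lra).
  pose proof (pos_INR n) as HN.
  unfold QQ, pp. set (N := INR n) in *. set (y := yy x) in *. set (D := DD x) in *.
  assert (HD2 : 0 <= D * D <= 1) by nra.
  assert (HyD : 0 <= y * D <= 1) by nra.
  apply Rabs_le. split.
  - assert (15 * N ^ 2 * D ^ 2 >= 0) by nra.
    assert (N * D ^ 2 <= N) by nra.
    assert (30 * N * y * D >= 0) by nra.
    assert (15 * y * (1 + y) >= 0) by nra.
    nra.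
  - assert (15 * N ^ 2 * D ^ 2 <= 15 * N ^ 2) by nra.
    assert (N * D ^ 2 >= 0) by nra.
    assert (N * y * D <= N) by nra.
    assert (15 * y * (1 + y) <= 30) by nra.
    nra.
Qed.

Lemma TT_bound n x : 0 <= x <= 1 -> Rabs (TT n x) <= 60000 * (INR n + 1) ^ 2 * rho ^ n.
Proof.
  intros Hx. pose proof (yy_bound x Hx) as [Hy0 Hy1]. pose proof (DD_pos x Hx) as HD.
  pose proof (QQ_bound n x Hx) as HQ.
  unfold TT. unfold Rdiv. rewrite !Rabs_mult.
  rewrite (Rabs_pos_eq (yy x ^ n)) by (apply pow_le; lra).
  rewrite (Rabs_pos_eq (/ DD x ^ 3)) by (apply Rlt_le, Rinv_0_lt_compat, pow_lt; lra).
  assert (H1 : yy x ^ n <= rho ^ n) by (apply pow_incr; unfold rho; lra).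
  assert (H2 : / DD x ^ 3 <= (32/5) ^ 3).
  { replace ((32/5)^3) with (/ (5/32)^3) by field. apply Rinv_le_contravar.
    - apply pow_lt; lra.
    - apply pow_incr; lra. }
  assert (0 <= rho ^ n) by (apply pow_le; unfold rho; lra).
  assert (0 <= Rabs (QQ (INR n) x)) by apply Rabs_pos.
  assert (0 <= / DD x ^ 3) by (apply Rlt_le, Rinv_0_lt_compat, pow_lt; lra).
  assert (0 <= yy x ^ n) by (apply pow_le; lra).
  apply Rle_trans with (rho ^ n * (200 * (INR n + 1) ^ 2) * (32/5)^3).
  - apply Rmult_le_compat; try assumption.
    + apply Rmult_le_pos; assumption.
    + apply Rmult_le_compat; assumption.
  - assert (0 <= (INR n + 1)^2) by apply pow2_ge_0. nra.
Qed.

Lemma lim_bound : is_lim_seq (fun n => (INR n + 1) ^ 2 * rho ^ n) 0.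
Proof.
  set (c := fun n => (INR n + 1) ^ 2 * rho ^ n).
  assert (Hpos : forall n, 0 < c n).
  { intro n. unfold c. apply Rmult_lt_0_compat.
    - pose proof (pos_INR n). nra.
    - apply pow_lt. unfold rho; lra. }
  assert (Hinv : is_lim_seq (fun n => / (INR n + 1)) 0).
  { assert (H := is_lim_seq_inv _ _ is_lim_seq_INR ltac:(discriminate)).
    apply is_lim_seq_incr_1 in H.
    eapply is_lim_seq_ext; [|exact H]. intro n. cbv beta. rewrite S_INR. reflexivity. }
  assert (Hrat : is_lim_seq (fun n => Rabs (c (S n) / c n)) rho).
  { assert (H := is_lim_seq_mult' _ _ _ _
        (is_lim_seq_mult' _ _ _ _ (is_lim_seq_plus' _ _ _ _ (is_lim_seq_const 1) Hinv)
                                  (is_lim_seq_plus' _ _ _ _ (is_lim_seq_const 1) Hinv))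
        (is_lim_seq_const rho)).
    replace rho with ((1 + 0) * (1 + 0) * rho) by ring.
    eapply is_lim_seq_ext; [|exact H]. intro n. simpl.
    rewrite Rabs_pos_eq.
    - unfold c. rewrite S_INR. pose proof (pos_INR n). 
      assert (0 < rho ^ n) by (apply pow_lt; unfold rho; lra).
      simpl pow. field. split; lra.
    - apply Rlt_le. unfold Rdiv. apply Rmult_lt_0_compat; [apply Hpos | apply Rinv_0_lt_compat, Hpos]. }
  assert (Hs := ex_series_DAlembert c rho ltac:(unfold rho; lra) ltac:(intro n; specialize (Hpos n); lra) Hrat).
  apply ex_series_lim_0 in Hs.
  eapply is_lim_seq_ext; [|exact Hs]. intro n. simpl. apply Rabs_pos_eq, Rlt_le, Hpos.
Qed.

Lemma sum_Ts n : sum_n (fun k => term (S k)) n = Ts (S n).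
Proof.
  induction n as [|n IH].
  - rewrite sum_O. simpl. ring.
  - rewrite sum_Sn, IH. reflexivity.
Qed.

Theorem lemma2p3 : is_series (fun n : nat => term (S n)) (30 - 3 / 2 * PI).
Proof.
  set (L := 30 - 3 / 2 * PI).
  set (b := fun n => 60000 * ((INR (S (S n)) + 1) ^ 2 * rho ^ (S (S n)))).
  assert (Hb : is_lim_seq b 0).
  { pose proof lim_bound as H. apply is_lim_seq_incr_1 in H. apply is_lim_seq_incr_1 in H.
    apply (is_lim_seq_scal_l _ 60000) in H. simpl in H. rewrite Rmult_0_r in H. exact H. }
  assert (H : is_lim_seq (sum_n (fun k => term (S k))) L).
  { apply (is_lim_seq_le_le (fun n => L - b n) _ (fun n => L + b n)).
    - intro n. rewrite sum_Ts.
      pose proof (@norm_RInt_le_const R_NormedModule (TT (S (S n))) 0 1 _ (60000 * (INR (S (S n)) + 1) ^ 2 * rho ^ (S (S n)))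
                   ltac:(lra) (fun x Hx => TT_bound (S (S n)) x Hx) (int_tail (S n))) as H.
      change (norm ?u) with (Rabs u) in H.
      apply Rabs_le_between in H. unfold b, L. lra.
    - replace (Finite L) with (Finite (L - 0)) by (f_equal; ring).
      apply is_lim_seq_minus'; [apply is_lim_seq_const | exact Hb].
    - replace (Finite L) with (Finite (L + 0)) by (f_equal; ring).
      apply is_lim_seq_plus'; [apply is_lim_seq_const | exact Hb]. }
  exact H.
Qed.
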